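(* Let $G$ be a connected graph with $n$ vertices. (a) If $n=12$, then $\frac{q(G)}{R(G)}\le \frac{11}{3}$, with equality if and only if $G=K_{12}$. (b) If $n\ge 13$, then $\frac{q(G)}{R(G)}\le \frac{n}{\sqrt{n-1}}$, with equality if and only if $G=S_n$.
   Context: All graphs are finite and simple. For a graph $G$ and a vertex $u$, $d(u)$ denotes the degree of $u$. The Randić index is $R(G)=\sum_{\{u,v\}\in E(G)} \frac{1}{\sqrt{d(u)d(v)}}$. The signless Laplacian matrix of $G$ is $Q=D+A$, where $D$ is the diagonal matrix of vertex degrees and $A$ is the adjacency matrix; $q(G)$ denotes the largest eigenvalue of $Q$. $K_n$ is the complete graph and $S_n$ the star on $n$ vertices. *)

(* Defs.v *)
(* Graphs on vertex set 'I_n given by a symmetric irreflexive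
   boolean relation; real numbers modelled by an arbitrary real closed field. *)
From HB Require Import structures.
From mathcomp Require Import all_boot all_order all_algebra.
Set Implicit Arguments. Unset Strict Implicit. Unset Printing Implicit Defensive.
Import Order.TTheory GRing.Theory Num.Theory.
Local Open Scope ring_scope.

Definition simple_graph (n : nat) (e : rel 'I_n) : Prop :=
  symmetric e /\ irreflexive e.

Definition connected_graph (n : nat) (e : rel 'I_n) : Prop :=
  forall x y : 'I_n, connect e x y.

Definition deg (n : nat) (e : rel 'I_n) (u : 'I_n) : nat := #|[set v | e u v]|.

Definition randic (R : rcfType) (n : nat) (e : rel 'I_n) : R :=
  \sum_(u < n) \sum_(v < n | (u < v)%N && e u v)
     (Num.sqrt ((deg e u)%:R * (deg e v)%:R))^-1.

Definition signless_laplacian (R : rcfType) (n : nat) (e : rel 'I_n) : 'M[R]_n :=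
  \matrix_(i, j) ((if i == j then (deg e i)%:R else 0) + (e i j)%:R).

(* q is the largest eigenvalue of the (symmetric, hence real-spectrum) matrix M *)
Definition largest_eigenvalue (R : rcfType) (n : nat) (M : 'M[R]_n) (q : R) : Prop :=
  eigenvalue M q /\ forall mu : R, eigenvalue M mu -> mu <= q.

Definition is_complete (n : nat) (e : rel 'I_n) : Prop :=
  forall x y : 'I_n, x != y -> e x y.

(* G = S_n (up to isomorphism): some centre c adjacent exactly to all others *)
Definition is_star (n : nat) (e : rel 'I_n) : Prop :=
  exists c : 'I_n, forall x y : 'I_n,
    e x y = (x != y) && ((x == c) || (y == c)).

(* Main.v *)
Require Import Defs.
From HB Require Import structures.
From mathcomp Require Import all_boot all_order all_algebra.
From mathcomp Require Import ring lra zify.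
Import Order.TTheory GRing.Theory Num.Theory.
Local Open Scope ring_scope.
Set Implicit Arguments. Unset Strict Implicit. Unset Printing Implicit Defensive.

Lemma exists_max (R : realDomainType) (I : finType) (i0 : I) (F : I -> R) :
  exists i, forall j, F j <= F i.
Proof.
case: (@arg_maxP _ _ I i0 xpredT F isT) => i _ H; exists i => j; exact: H.
Qed.

Lemma deg_pos (n : nat) (e : rel 'I_n) : simple_graph e -> connected_graph e ->
  (1 < n)%N -> forall u, (0 < deg e u)%N.
Proof.
move=> [sym irr] con n2 u.
have [v uv] : exists v : 'I_n, v != u.
  case: (eqVneq u (Ordinal n2)) => [->|ne].
    by exists (Ordinal (ltn_trans (ltnSn 0) n2)).
  by exists (Ordinal n2); rewrite eq_sym.
move: (con u v) => /connectP [[|w p] /= P L]; first by rewrite L eqxx in uv.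
move/andP: P => [euw _].
by apply/card_gt0P; exists w; rewrite inE.
Qed.

Lemma deg_le (n : nat) (e : rel 'I_n) : simple_graph e -> forall u, (deg e u <= n.-1)%N.
Proof.
move=> [sym irr] u; have -> : n.-1 = #|'I_n|.-1 by rewrite card_ord.
rewrite /deg -(cardsC1 u).
apply: subset_leq_card; apply/subsetP => v; rewrite !inE.
by apply: contraTneq => ->; rewrite irr.
Qed.

Lemma sum_adj1 (R : rcfType) (n : nat) (e : rel 'I_n) u :
  \sum_(v | e u v) (1:R) = (deg e u)%:R.
Proof.
rewrite (eq_bigl (fun v => v \in [set v | e u v])); last by move=> v; rewrite inE.
by rewrite sumr_const.
Qed.

Lemma pair_sum (R : rcfType) (n : nat) (e : rel 'I_n) (h : 'I_n -> 'I_n -> R) :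
  simple_graph e ->
  \sum_(u : 'I_n) \sum_(v : 'I_n | (u < v)%N && e u v) (h u v + h v u) =
  \sum_(u : 'I_n) \sum_(v : 'I_n | e u v) h u v.
Proof.
move=> [sym irr].
transitivity (\sum_(u : 'I_n) \sum_(v : 'I_n) (if (u < v)%N && e u v then h u v else 0) +
              \sum_(u : 'I_n) \sum_(v : 'I_n) (if (u < v)%N && e u v then h v u else 0)).
  rewrite -big_split; apply: eq_bigr => u _; rewrite -big_split big_mkcond.
  by apply: eq_bigr => v _ /=; case: ifP => _; rewrite ?addr0.
rewrite [X in _ + X]exchange_big -big_split /=; apply: eq_bigr => u _.
rewrite -big_split [RHS]big_mkcond /=; apply: eq_bigr => v _.
rewrite (sym v u).
case: (ltngtP u v) => [uv|vu|/val_inj ->]; rewrite ?andbF ?addr0 ?add0r //.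
by rewrite irr.
Qed.

Lemma eig_row (R : rcfType) (n : nat) (e : rel 'I_n) (v : 'rV[R]_n) (i : 'I_n) :
  simple_graph e ->
  (v *m signless_laplacian R e) 0 i = v 0 i * (deg e i)%:R + \sum_(j | e i j) v 0 j.
Proof.
move=> [sym irr]; rewrite mxE.
under eq_bigr do rewrite mxE mulrDr.
rewrite big_split /=; congr (_ + _).
  rewrite (bigD1 i) //= eqxx big1 ?addr0 // => j /negPf ->; by rewrite mulr0.
rewrite [RHS]big_mkcond; apply: eq_bigr => j _ /=.
by rewrite (sym j i); case: (e i j); rewrite ?mulr1 ?mulr0.
Qed.

Lemma q_step (R : rcfType) (n : nat) (e : rel 'I_n) (mu : R) :
  simple_graph e -> connected_graph e -> (1 < n)%N ->
  eigenvalue (signless_laplacian R e) mu ->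
  exists i, (mu - (deg e i)%:R) * (deg e i)%:R <= \sum_(j | e i j) ((deg e j)%:R : R).
Proof.
move=> sg con n2 /eigenvalueP [v Hv nz].
have dpos j : 0 < (deg e j)%:R :> R by rewrite ltr0n (deg_pos sg con n2).
case: (pickP (fun j => v 0 j != 0)) => [j0 Hj0|H]; last first.
  case/eqP: nz; apply/rowP => j; rewrite !mxE; move: (H j) => /= /negbFE/eqP.
  by [] || (by move=> ->).
have [i Hi] := exists_max j0 (fun j => `|v 0 j| / (deg e j)%:R).
exists i.
have := congr1 (fun M : 'rV[R]_n => M 0 i) Hv; rewrite /= eig_row // mxE => Heq.
set a := `|v 0 i|.
have apos : 0 < a.
  have h1 : 0 < `|v 0 j0| / (deg e j0)%:R by rewrite divr_gt0 ?normr_gt0.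
  have := lt_le_trans h1 (Hi j0); rewrite /= pmulr_lgt0 //; by rewrite invr_gt0.
set S := \sum_(j | e i j) ((deg e j)%:R : R).
have H : (mu - (deg e i)%:R) * a <= a / (deg e i)%:R * S.
  apply: (le_trans (ler_norm _)).
  have -> : `|(mu - (deg e i)%:R) * a| = `|\sum_(j | e i j) v 0 j|.
    have E2 : \sum_(j | e i j) v 0 j = (mu - (deg e i)%:R) * v 0 i.
      by rewrite mulrBl -Heq; ring.
    by rewrite E2 /a !normrM normr_id.
  apply: (le_trans (ler_norm_sum _ _ _)).
  rewrite /S mulr_sumr; apply: ler_sum => j _.
  have := Hi j; rewrite /= ler_pdivrMr // => hj.
have H2 : (mu - (deg e i)%:R) * (deg e i)%:R * a <= S * a.
  have E : a / (deg e i)%:R * S * (deg e i)%:R = S * a.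
    by field; rewrite gt_eqF.
  rewrite -E mulrAC; apply: ler_wpM2r => //; exact: ltW.
by rewrite ler_pM2r in H2.
Qed.

Lemma B_arith (R : rcfType) (mu d S D N : R) :
  1 <= d -> d <= N -> (mu - d) * d <= S -> S <= D - N -> S <= d * N ->
  mu <= D / N + N - 1.
Proof.
move=> d1 dN h0 hT hS.
have Npos : 0 < N by lra.
have h1 : mu * d <= d * d + S by nra.
have h2 : d * d * N + S * N <= (D - N) * d + N * N * d.
  case: (lerP (d * N) (D - N)) => c.
    have : S * N <= d * N * N by nra.
    nra.
  have : S * N <= (D - N) * N by nra.
  have : (d - N) * (d * N - (D - N)) <= 0 by nra.
  nra.
have h3 : mu * N <= D - N + N * N.
  have : mu * d * N <= ((D - N) + N * N) * d by nra.
  move=> h; rewrite -(ler_pM2r (_ : 0 < d)) ?(lt_le_trans ltr01 d1) //; nra.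

have -> : D / N + N - 1 = (D - N + N * N) / N by field; rewrite gt_eqF.
by rewrite ler_pdivlMr.
Qed.

Lemma natr_pred (R : rcfType) (n : nat) : (0 < n)%N -> (n.-1)%:R = n%:R - 1 :> R.
Proof. by case: n => // n _; rewrite /= -[n.+1]addn1 natrD addrK. Qed.

Lemma deg_leR (R : rcfType) (n : nat) (e : rel 'I_n) u :
  simple_graph e -> (deg e u)%:R <= n%:R - 1 :> R.
Proof.
move=> sg; have n0 : (0 < n)%N by case: n e u sg => [|n] ? [].
by rewrite -natr_pred // ler_nat deg_le.
Qed.

Lemma S_le_dN (R : rcfType) (n : nat) (e : rel 'I_n) i :
  simple_graph e ->
  \sum_(j | e i j) ((deg e j)%:R : R) <= (deg e i)%:R * (n%:R - 1).
Proof.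
move=> sg; rewrite -sum_adj1 mulr_suml; apply: ler_sum => j _.
by rewrite mul1r deg_leR.
Qed.

Lemma S_le_D (R : rcfType) (n : nat) (e : rel 'I_n) i :
  simple_graph e -> connected_graph e -> (1 < n)%N ->
  \sum_(j | e i j) ((deg e j)%:R : R) <= \sum_j ((deg e j)%:R : R) - (n%:R - 1).
Proof.
move=> sg con n2; have [sym irr] := sg.
rewrite [X in _ <= X - _](bigID (fun j => e i j)) /=.
have hn : \sum_(j : 'I_n) (1 : R) = n%:R by rewrite sumr_const card_ord.
have hc : \sum_(j | ~~ e i j) (1 : R) = n%:R - (deg e i)%:R.
  by rewrite -hn [X in _ = X - _](bigID (fun j => e i j)) /= sum_adj1 addrC addrK.
have hd : (deg e i)%:R - 1 <= \sum_(j | ~~ e i j) ((deg e j)%:R - 1 : R).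
  rewrite (bigD1 i) ?irr //= lerDl; apply: sumr_ge0 => j _.
  by rewrite subr_ge0 ler1n (deg_pos sg con n2).
have : \sum_(j | ~~ e i j) ((deg e j)%:R - 1 : R) =
       \sum_(j | ~~ e i j) ((deg e j)%:R : R) - \sum_(j | ~~ e i j) (1 : R).
  by rewrite -sumrB.
move: hc hd; set X := \sum_(j | ~~ e i j) _; set Y := \sum_(j | ~~ e i j) _.
set Z := \sum_(j | ~~ e i j) _; move=> hc hd hz. lra.
Qed.

Lemma q_le_B (R : rcfType) (n : nat) (e : rel 'I_n) (mu : R) :
  simple_graph e -> connected_graph e -> (1 < n)%N ->
  eigenvalue (signless_laplacian R e) mu ->
  mu <= (\sum_j ((deg e j)%:R : R)) / (n%:R - 1) + (n%:R - 1) - 1.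
Proof.
move=> sg con n2 ev; have [i Hi] := q_step sg con n2 ev.
apply: (B_arith (d := (deg e i)%:R) (S := \sum_(j | e i j) ((deg e j)%:R : R))) => //.
- by rewrite ler1n (deg_pos sg con n2).
- exact: deg_leR.
- exact: S_le_D.
- exact: S_le_dN.
Qed.

Lemma sum_adj_const (R : rcfType) (n : nat) (e : rel 'I_n) u (K : R) :
  \sum_(v | e u v) K = (deg e u)%:R * K.
Proof.
rewrite -sum_adj1 mulr_suml; apply: eq_bigr => v _; by rewrite mul1r.
Qed.

Definition slack (R : rcfType) (n : nat) (e : rel 'I_n) (c l : R) (u v : 'I_n) : R :=
  (Num.sqrt ((deg e u)%:R * (deg e v)%:R))^-1 - c
    - l * (((deg e u)%:R)^-1 + ((deg e v)%:R)^-1).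

Lemma randic_decomp (R : rcfType) (n : nat) (e : rel 'I_n) (c l : R) :
  simple_graph e -> connected_graph e -> (1 < n)%N ->
  randic R e = c * (\sum_j ((deg e j)%:R : R)) / 2 + l * n%:R
     + \sum_(u : 'I_n) \sum_(v : 'I_n | (u < v)%N && e u v) slack e c l u v.
Proof.
move=> sg con n2.
have dnz j : (deg e j)%:R != 0 :> R by rewrite pnatr_eq0 -lt0n (deg_pos sg con n2).
have E : \sum_(u : 'I_n) \sum_(v : 'I_n | (u < v)%N && e u v)
          (c + l * (((deg e u)%:R)^-1 + ((deg e v)%:R)^-1))
         = c * (\sum_j ((deg e j)%:R : R)) / 2 + l * n%:R.
  transitivity (\sum_(u : 'I_n) \sum_(v : 'I_n | (u < v)%N && e u v)
      ((c / 2 + l / (deg e u)%:R) + (c / 2 + l / (deg e v)%:R))).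
    apply: eq_bigr => u _; apply: eq_bigr => v _; field; by rewrite !dnz.
  have P := @pair_sum R n e (fun u v => c / 2 + l / (deg e u)%:R) sg.
  simpl in P; rewrite P.
  transitivity (\sum_(u : 'I_n) (c / 2 * (deg e u)%:R + l)).
    apply: eq_bigr => u _; rewrite sum_adj_const; field; by rewrite dnz.
  rewrite big_split /= -mulr_sumr sumr_const card_ord.
  rewrite mulr_natr; ring.
rewrite -E -big_split /= /randic; apply: eq_bigr => u _.
rewrite -big_split /=; apply: eq_bigr => v _; rewrite /slack; ring.
Qed.

Lemma slack_form (R : rcfType) (a b c0 x y : R) :
  1 <= x -> 1 <= y -> 0 < a ->
  (Num.sqrt (x * y))^-1 - c0 - b * (x^-1 + y^-1) =
  (a * Num.sqrt (x * y) - a * c0 * (x * y) - a * b * (x + y)) / (a * (x * y)).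
Proof.
move=> x1 y1 a0.
have xy1 : 1 <= x * y by nra.
set P := Num.sqrt (x * y).
have hP2 : P ^+ 2 = x * y by rewrite sqr_sqrtr //; lra.
have P0 : P != 0 by apply/negP => /eqP P0; move: hP2; rewrite P0 expr2 mul0r; lra.
have -> : P^-1 = P / (x * y) by rewrite -hP2 expr2; field.
field; apply/and3P; split; apply/negP => /eqP h; lra.
Qed.

Lemma edge_b (R : rcfType) (n k x y : R) :
  13 <= n -> 0 <= k -> k ^+ 2 = n - 1 -> 1 <= x -> x <= n - 1 -> 1 <= y -> y <= n - 1 ->
  0 <= (Num.sqrt (x * y))^-1 - 2 / (n * k) - k * (n - 2) / n ^+ 2 * (x^-1 + y^-1) /\
  ((Num.sqrt (x * y))^-1 - 2 / (n * k) - k * (n - 2) / n ^+ 2 * (x^-1 + y^-1) = 0 ->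
    (x = 1 /\ y = n - 1) \/ (x = n - 1 /\ y = 1)).
Proof.
move=> n13 k0 hk x1 xn y1 yn.
have hn : n = k ^+ 2 + 1 by rewrite hk; ring.
have k12 : 12 <= k ^+ 2 by lra.
have k3 : 346 / 100 <= k by nra.
have npos : 0 < n by lra.
have kpos : 0 < k by lra.
set a := n ^+ 2 * k.
have a0 : 0 < a by rewrite /a; apply: mulr_gt0 => //; apply: exprn_gt0.
rewrite (slack_form _ _ x1 y1 a0).
have xy1 : 1 <= x * y by nra.
set P := Num.sqrt (x * y).
have hP2 : P ^+ 2 = x * y by rewrite sqr_sqrtr //; lra.
have P0 : 0 <= P by apply: sqrtr_ge0.
have P1 : 1 <= P by nra.
have PN : P <= k ^+ 2 by nra.
have den : 0 < a * (x * y) by apply: mulr_gt0 => //; lra.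
have E1 : a * (2 / (n * k)) = 2 * n by rewrite /a; field; apply/andP; split; apply/negP => /eqP h; lra.
have E2 : a * (k * (n - 2) / n ^+ 2) = k ^+ 2 * (n - 2).
  by rewrite /a; field; apply/negP => /eqP h; lra.
rewrite E1 E2.
set s := a * P - 2 * n * (x * y) - k ^+ 2 * (n - 2) * (x + y).
suff [h1 h2] : 0 <= s /\ (s = 0 -> (x = 1 /\ y = n - 1) \/ (x = n - 1 /\ y = 1)).
  split; first by apply: divr_ge0 => //; exact: ltW.
  move=> /eqP; rewrite mulf_eq0 invr_eq0 (gt_eqF den) orbF => /eqP; exact: h2.
have Exy : (x - 1) * (y - 1) >= 0 by nra.
have Exy2 : (k ^+ 2 - x) * (k ^+ 2 - y) >= 0 by nra.
case: (lerP P k) => Pk.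
  set A1 := (2 * n + k ^+ 2 * (n - 2)) * (P + k) - n ^+ 2 * k.
  have A1pos : 0 < A1.
    have -> : A1 = (k ^+ 4 + k ^+ 2 + 2) * (P - 1) + (k ^+ 3 * (k - 1) + k ^+ 2 + k + 2).
      by rewrite /A1 hn; ring.
    have q1 : 0 <= (k ^+ 4 + k ^+ 2 + 2) * (P - 1).
      apply: mulr_ge0; last by lra.
      by rewrite addr_ge0 // addr_ge0 // exprn_ge0 // ltW.
    have q2 : 0 <= k ^+ 3 * (k - 1) by apply: mulr_ge0; [rewrite exprn_ge0 // ltW|lra].
    have q3 : 0 <= k ^+ 2 by rewrite exprn_ge0 // ltW.
    lra.
  have id1 : s = (k - P) * A1 + k ^+ 2 * (n - 2) * ((x - 1) * (y - 1))
                 + (2 * n + k ^+ 2 * (n - 2)) * (P ^+ 2 - x * y).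
    by rewrite /s /A1 /a hn; ring.
  rewrite hP2 subrr mulr0 addr0 in id1.
  have t1 : 0 <= (k - P) * A1 by apply: mulr_ge0; lra.
  have t2 : 0 <= k ^+ 2 * (n - 2) * ((x - 1) * (y - 1)) by apply: mulr_ge0 => //; nra.
  split; first by lra.
  move=> s0.
  have z1 : (k - P) * A1 = 0 by lra.
  have z2 : k ^+ 2 * (n - 2) * ((x - 1) * (y - 1)) = 0 by lra.
  have PK : P = k by move/eqP: z1; rewrite mulf_eq0 (gt_eqF A1pos) orbF subr_eq0 => /eqP.
  have xyN : x * y = n - 1 by rewrite -hP2 PK hk.
  move/eqP: z2; rewrite mulf_eq0 mulf_eq0.
  case/orP => [/orP [] /eqP h|]; first (by move: h; nra); first (by lra).
  rewrite mulf_eq0 !subr_eq0 => /orP [] /eqP h.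
    by left; split => //; rewrite h mul1r in xyN.
  by right; split => //; rewrite h mulr1 in xyN.
set A2 := k ^+ 3 * (n - 2) - (3 * n - 2) * P.
have A2pos : 0 < A2.
  have t0 : 0 <= k - 173 / 50 by lra.
  have t2 := mulr_ge0 t0 t0.
  have t3 := mulr_ge0 (mulr_ge0 t0 t0) t0.
  have hk3 : 0 < k ^+ 3 - 3 * k ^+ 2 - k - 1 by lra.
  have h1 : 0 < k ^+ 3 * (n - 2) - (3 * n - 2) * k ^+ 2.
    have -> : k ^+ 3 * (n - 2) - (3 * n - 2) * k ^+ 2 = k ^+ 2 * (k ^+ 3 - 3 * k ^+ 2 - k - 1).
      by rewrite hn; ring.
    by apply: mulr_gt0 => //; apply: exprn_gt0.
  have h2 : 0 <= (3 * n - 2) * (k ^+ 2 - P) by apply: mulr_ge0; lra.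
  rewrite /A2; lra.
have id2 : s = (P - k) * A2 + (n - 2) * ((k ^+ 2 - x) * (k ^+ 2 - y))
               + (3 * n - 2) * (P ^+ 2 - x * y).
  by rewrite /s /A2 /a hn; ring.
rewrite hP2 subrr mulr0 addr0 in id2.
have t1 : 0 <= (P - k) * A2 by apply: mulr_ge0; lra.
have t2 : 0 <= (n - 2) * ((k ^+ 2 - x) * (k ^+ 2 - y)) by apply: mulr_ge0 => //; lra.
split; first by lra.
move=> s0.
have z1 : (P - k) * A2 = 0 by lra.
have z2 : (n - 2) * ((k ^+ 2 - x) * (k ^+ 2 - y)) = 0 by lra.
have PK : P = k by move/eqP: z1; rewrite mulf_eq0 (gt_eqF A2pos) orbF subr_eq0 => /eqP.
have xyN : x * y = n - 1 by rewrite -hP2 PK hk.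
move/eqP: z2; rewrite mulf_eq0 => /orP [/eqP h|]; first by lra.
rewrite mulf_eq0 !subr_eq0 => /orP [] /eqP h.
  right; split; first by rewrite -h hk.
  rewrite -h hk in xyN; apply: (mulfI (_ : n - 1 != 0)); first by apply/negP => /eqP; lra.
  by rewrite mulr1.
left; split; last by rewrite -h hk.
rewrite -h hk in xyN; apply: (mulIf (_ : n - 1 != 0)); first by apply/negP => /eqP; lra.
by rewrite mul1r.
Qed.

Lemma edge_a (R : rcfType) (x y : R) :
  1 <= x -> x <= 11 -> 1 <= y -> y <= 11 ->
  0 <= (Num.sqrt (x * y))^-1 - 6 / 121 - 5 / 22 * (x^-1 + y^-1) /\
  ((Num.sqrt (x * y))^-1 - 6 / 121 - 5 / 22 * (x^-1 + y^-1) = 0 -> x = 11 /\ y = 11).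
Proof.
move=> x1 xn y1 yn.
have a0 : (0 : R) < 242 by [].
rewrite (slack_form _ _ x1 y1 a0).
have xy1 : 1 <= x * y by nra.
set P := Num.sqrt (x * y).
have hP2 : P ^+ 2 = x * y by rewrite sqr_sqrtr //; lra.
have P0 : 0 <= P by apply: sqrtr_ge0.
have P1 : 1 <= P by nra.
have PN : P <= 11 by nra.
have den : 0 < 242 * (x * y) by apply: mulr_gt0 => //; lra.
have E1 : 242 * (6 / 121) = 12 :> R by field.
have E2 : 242 * (5 / 22) = 55 :> R by field.
rewrite E1 E2.
set s := 242 * P - 12 * (x * y) - 55 * (x + y).
suff [h1 h2] : 0 <= s /\ (s = 0 -> x = 11 /\ y = 11).
  split; first by apply: divr_ge0 => //; exact: ltW.
  move=> /eqP; rewrite mulf_eq0 invr_eq0 (gt_eqF den) orbF => /eqP; exact: h2.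
have Exy : (x - 1) * (y - 1) >= 0 by nra.
have Exy2 : (11 - x) * (11 - y) >= 0 by nra.
case: (lerP (P ^+ 2) 11) => Pk.
  have Pb : P <= 10 / 3.
    case: (lerP P (10 / 3)) => // h; exfalso.
    have h1 : 0 < P - 10 / 3 by lra.
    have h2 : 0 < P + 10 / 3 by lra.
    have := mulr_gt0 h1 h2; rewrite expr2 in Pk; lra.
  have g1 : 0 < - 67 * P ^+ 2 + 242 * P - 55.
    have := mulr_ge0 (_ : 0 <= P - 1) (_ : 0 <= 10 / 3 - P).
    move=> /(_ ltac:(lra) ltac:(lra)) h; lra.
  have id1 : s = (- 67 * P ^+ 2 + 242 * P - 55) + 55 * ((x - 1) * (y - 1))
                 + 67 * (P ^+ 2 - x * y) by rewrite /s; ring.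
  rewrite hP2 subrr mulr0 addr0 in id1.
  split; first by lra.
  move=> s0; exfalso; lra.
have P3 : 33 / 10 <= P.
  case: (lerP (33 / 10) P) => // h; exfalso.
  have h1 : 0 < 33 / 10 - P by lra.
  have h2 : 0 < P + 33 / 10 by lra.
  have := mulr_gt0 h1 h2; rewrite expr2 in Pk; lra.
have id2 : s = (11 - P) * (17 * P - 55) + 5 * ((11 - x) * (11 - y))
               + 17 * (P ^+ 2 - x * y) by rewrite /s; ring.
rewrite hP2 subrr mulr0 addr0 in id2.
have t1 : 0 <= (11 - P) * (17 * P - 55) by apply: mulr_ge0; lra.
split; first by lra.
move=> s0.
have z1 : (11 - P) * (17 * P - 55) = 0 by lra.
have z2 : (11 - x) * (11 - y) = 0 by lra.
have P11 : P = 11.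
  move/eqP: z1; rewrite mulf_eq0 => /orP [] /eqP h; lra.
have xy121 : x * y = 121 by rewrite -hP2 P11; rewrite expr2; lra.
move/eqP: z2; rewrite mulf_eq0 => /orP [] /eqP h.
  have hx : x = 11 by lra.
  rewrite hx in xy121; split => //; lra.
have hy : y = 11 by lra.
rewrite hy in xy121; split => //; lra.
Qed.

Lemma slack_sym (R : rcfType) (n : nat) (e : rel 'I_n) (c l : R) u v :
  slack e c l u v = slack e c l v u.
Proof. by rewrite /slack mulrC [X in l * X]addrC. Qed.

Lemma main_gen (R : rcfType) (n : nat) (e : rel 'I_n) (q c l C : R) :
  simple_graph e -> connected_graph e -> (1 < n)%N ->
  largest_eigenvalue (signless_laplacian R e) q ->
  (forall u v, e u v -> 0 <= slack e c l u v) ->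
  0 < C ->
  C * (c * (\sum_j ((deg e j)%:R : R)) / 2 + l * n%:R) =
     (\sum_j ((deg e j)%:R : R)) / (n%:R - 1) + (n%:R - 1) - 1 ->
  0 < c * (\sum_j ((deg e j)%:R : R)) / 2 + l * n%:R ->
  q / randic R e <= C /\ (q / randic R e = C -> forall u v, e u v -> slack e c l u v = 0).
Proof.
move=> sg con n2 [ev qmax] sl0 C0 CL L0.
have [sym irr] := sg.
set L := c * _ / 2 + l * _ in CL L0.
set SL := \sum_(u : 'I_n) \sum_(v : 'I_n | (u < v)%N && e u v) slack e c l u v.
have SL0 : 0 <= SL.
  by apply: sumr_ge0 => u _; apply: sumr_ge0 => v /andP [_ ?]; apply: sl0.
have RE : randic R e = L + SL by rewrite (randic_decomp c l sg con n2).
have R0 : 0 < randic R e by rewrite RE; lra.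
have qB := q_le_B sg con n2 ev.
rewrite -CL in qB.
rewrite ler_pdivrMr //.
split; first by rewrite RE; nra.
move=> hq0; have hq : q = C * randic R e by rewrite -hq0 divfK // gt_eqF.
have SLz : SL = 0 by move: qB; rewrite hq RE; nra.
have inner : forall u : 'I_n, \sum_(v : 'I_n | (u < v)%N && e u v) slack e c l u v = 0.
  move=> u; apply: (psumr_eq0P _ SLz) => // w _.
  by apply: sumr_ge0 => v /andP [_ ?]; apply: sl0.
have lt_case : forall u v : 'I_n, (u < v)%N -> e u v -> slack e c l u v = 0.
  move=> u v uv euv; apply: (psumr_eq0P _ (inner u)); last by rewrite uv euv.
  by move=> w /andP [_ ?]; apply: sl0.
move=> u v euv.
case: (ltngtP u v) => [uv|vu|/val_inj uv]; first exact: lt_case.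
  by rewrite slack_sym; apply: lt_case => //; rewrite sym.
by rewrite uv irr in euv.
Qed.

Lemma main_eq (R : rcfType) (n : nat) (e : rel 'I_n) (q c l C : R) :
  simple_graph e -> connected_graph e -> (1 < n)%N ->
  largest_eigenvalue (signless_laplacian R e) q ->
  (forall u v, e u v -> slack e c l u v = 0) ->
  C * (c * (\sum_j ((deg e j)%:R : R)) / 2 + l * n%:R) =
     (\sum_j ((deg e j)%:R : R)) / (n%:R - 1) + (n%:R - 1) - 1 ->
  0 < c * (\sum_j ((deg e j)%:R : R)) / 2 + l * n%:R ->
  eigenvalue (signless_laplacian R e)
     ((\sum_j ((deg e j)%:R : R)) / (n%:R - 1) + (n%:R - 1) - 1) ->
  q / randic R e = C.
Proof.
move=> sg con n2 [ev qmax] sl0 CL L0 evB.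
set L := c * _ / 2 + l * _ in CL L0.
have RE : randic R e = L.
  have SL0 : \sum_(u : 'I_n) \sum_(v : 'I_n | (u < v)%N && e u v) slack e c l u v = 0.
    apply: big1 => u _; apply: big1 => v /andP [_ ?]; by apply: sl0.
  by rewrite (randic_decomp c l sg con n2) SL0 addr0.
have qB := q_le_B sg con n2 ev.
have Bq := qmax _ evB.
have -> : q = C * L by rewrite CL; apply/eqP; rewrite eq_le qB Bq.
by rewrite RE mulfK // gt_eqF.
Qed.

Lemma deg_full (n : nat) (e : rel 'I_n) u :
  simple_graph e -> deg e u = n.-1 -> forall v, v != u -> e u v.
Proof.
move=> [sym irr] hd v vu.
have : [set v | e u v] = [set~ u].
  apply/eqP; rewrite eqEcard; apply/andP; split.
    apply/subsetP => w; rewrite !inE; apply: contraTneq => ->; by rewrite irr.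
  by rewrite cardsC1 card_ord -hd.
by move/setP => /(_ v); rewrite !inE vu => ->.
Qed.

Lemma deg_one (n : nat) (e : rel 'I_n) u w :
  deg e u = 1%N -> e u w -> forall y, e u y -> y = w.
Proof.
move=> /eqP /cards1P [x hx] euw y euy.
have hw : w \in [set v | e u v] by rewrite inE.
have hy : y \in [set v | e u v] by rewrite inE.
by rewrite hx !inE in hw hy; rewrite (eqP hw) (eqP hy).
Qed.

Lemma sum_deg_const (R : rcfType) (n : nat) (e : rel 'I_n) r :
  (forall u, deg e u = r) -> \sum_j ((deg e j)%:R : R) = n%:R * r%:R.
Proof.
move=> h; under eq_bigr do rewrite h.
by rewrite sumr_const card_ord mulr_natl.
Qed.

Lemma complete_deg (n : nat) (e : rel 'I_n) :
  simple_graph e -> is_complete e -> forall u, deg e u = n.-1.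
Proof.
move=> [sym irr] hc u; rewrite /deg.
have -> : [set v | e u v] = [set~ u].
  apply/setP => v; rewrite !inE; case: (eqVneq v u) => [->|ne] /=; first by rewrite irr.
  by apply: hc; rewrite eq_sym.
by rewrite cardsC1 card_ord.
Qed.

Lemma regular_eig (R : rcfType) (n : nat) (e : rel 'I_n) r :
  simple_graph e -> (0 < n)%N -> (forall u, deg e u = r) ->
  eigenvalue (signless_laplacian R e) (2 * r%:R).
Proof.
move=> sg n0 h; apply/eigenvalueP; exists (const_mx 1).
  apply/rowP => i; rewrite eig_row // !mxE.
  under eq_bigr do rewrite mxE.
  by rewrite sum_adj1 h mul1r mulr1; ring.
apply/negP => /eqP /rowP /(_ (Ordinal n0)); rewrite !mxE => /eqP; by rewrite oner_eq0.
Qed.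

Lemma star_facts (n : nat) (e : rel 'I_n) c :
  (forall x y : 'I_n, e x y = (x != y) && ((x == c) || (y == c))) ->
  deg e c = n.-1 /\ forall x, x != c -> deg e x = 1%N.
Proof.
move=> he; split.
  rewrite /deg; have -> : [set v | e c v] = [set~ c].
    by apply/setP => v; rewrite !inE he eqxx /= andbT eq_sym.
  by rewrite cardsC1 card_ord.
move=> x xc; rewrite /deg; have -> : [set v | e x v] = [set c].
  apply/setP => v; rewrite !inE he (negPf xc) /=.
  by case: (eqVneq v c) => [->|] /=; rewrite ?orbF ?orbT ?andbT ?andbF // xc.
by rewrite cards1.
Qed.

Lemma star_eig (R : rcfType) (n : nat) (e : rel 'I_n) c :
  simple_graph e -> (1 < n)%N ->
  (forall x y : 'I_n, e x y = (x != y) && ((x == c) || (y == c))) ->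
  eigenvalue (signless_laplacian R e) n%:R.
Proof.
move=> sg n2 he; have [dc dx] := star_facts he.
have n0 : (0 < n)%N by apply: ltn_trans n2.
apply/eigenvalueP; exists (\row_j (if j == c then n%:R - 1 else 1 : R)).
  apply/rowP => i; rewrite eig_row // !mxE.
  under eq_bigr do rewrite mxE.
  case: (eqVneq i c) => [->|ic].
    rewrite dc natr_pred //.
    rewrite (eq_bigr (fun _ => 1)); last first.
      move=> j; rewrite he eqxx /= andbT => jc; rewrite eq_sym in jc; by rewrite (negPf jc).
    rewrite sum_adj1 dc natr_pred //; ring.
  rewrite dx // (eq_bigl (fun j => j == c)); last first.
    by move=> j; rewrite he (negPf ic) /=; case: (eqVneq j c) => [->|] /=; rewrite ?andbF ?andbT // eq_sym.
  rewrite big_pred1_eq eqxx; ring.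
apply/negP => /eqP /rowP /(_ c); rewrite !mxE eqxx => /eqP.
rewrite subr_eq0 (_ : 1 = 1%:R) // eqr_nat => /eqP h; move: n2; by rewrite h.
Qed.

Lemma exists_nb (n : nat) (e : rel 'I_n) u :
  simple_graph e -> connected_graph e -> (1 < n)%N -> exists w, e u w.
Proof.
move=> sg con n2; have := deg_pos sg con n2 u; rewrite /deg => /card_gt0P [w].
by rewrite inE; exists w.
Qed.

Lemma degR_bounds (R : rcfType) (n : nat) (e : rel 'I_n) u :
  simple_graph e -> connected_graph e -> (1 < n)%N ->
  1 <= (deg e u)%:R :> R /\ (deg e u)%:R <= n%:R - 1 :> R.
Proof.
move=> sg con n2; split; last exact: deg_leR.
by rewrite ler1n (deg_pos sg con n2).
Qed.

Lemma natr_eq_pred (R : rcfType) (n m : nat) : (0 < n)%N ->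
  (m%:R : R) = n%:R - 1 -> m = n.-1.
Proof. by move=> n0; rewrite -natr_pred // => /eqP; rewrite eqr_nat => /eqP. Qed.

Lemma natr_eq1 (R : rcfType) (m : nat) : (m%:R : R) = 1 -> m = 1%N.
Proof. by rewrite (_ : 1 = 1%:R) // => /eqP; rewrite eqr_nat => /eqP. Qed.

Lemma part_a (R : rcfType) (e : rel 'I_12) (q : R) :
  simple_graph e -> connected_graph e ->
  largest_eigenvalue (signless_laplacian R e) q ->
     q / randic R e <= 11%:R / 3%:R /\
     (q / randic R e = 11%:R / 3%:R <-> is_complete e).
Proof.
move=> sg con lev; have [sym irr] := sg.
have n2 : (1 < 12)%N by [].
set D := \sum_j ((deg e j)%:R : R).
have D0 : 0 <= D by apply: sumr_ge0 => j _; apply: ler0n.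
have sl0 : forall u v : 'I_12, e u v -> 0 <= slack e (6 / 121 : R) (5 / 22) u v.
  move=> u v euv; have [h1 h2] := degR_bounds R u sg con n2.
  have [h3 h4] := degR_bounds R v sg con n2.
  have h2' : (deg e u)%:R <= 11 :> R by lra.
  have h4' : (deg e v)%:R <= 11 :> R by lra.
  by have [? _] := @edge_a R (deg e u)%:R (deg e v)%:R h1 h2' h3 h4'.
have C0 : (0 : R) < 11%:R / 3%:R by rewrite divr_gt0 // ltr0n.
have CL : 11%:R / 3%:R * (6 / 121 * D / 2 + 5 / 22 * 12%:R) = D / (12%:R - 1) + (12%:R - 1) - 1.
  by field.
have L0 : 0 < 6 / 121 * D / 2 + 5 / 22 * (12%:R : R) by lra.
have [le eqimp] := main_gen sg con n2 lev sl0 C0 CL L0.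
split => //; split.
  move=> /eqimp hz x y xy.
  have [w xw] := exists_nb x sg con n2.
  have [h1 h2] := degR_bounds R x sg con n2.
  have [h3 h4] := degR_bounds R w sg con n2.
  have h2' : (deg e x)%:R <= 11 :> R by lra.
  have h4' : (deg e w)%:R <= 11 :> R by lra.
  have [_ ] := @edge_a R (deg e x)%:R (deg e w)%:R h1 h2' h3 h4'.
  move=> /(_ (hz _ _ xw)) [dx _].
  apply: (deg_full sg); last by rewrite eq_sym.
  by apply/eqP; rewrite -(eqr_nat R) dx.
move=> hc.
have dc := complete_deg sg hc.
apply: (main_eq (c := 6 / 121) (l := 5 / 22)) => //.
- move=> u v euv; rewrite /slack !dc /=.
  have -> : (11%:R * 11%:R : R) = 11%:R ^+ 2 by rewrite expr2.
  by rewrite sqrtr_sqr ger0_norm //; field.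
- rewrite (sum_deg_const R dc) /=.
  have -> : (12%:R * 11%:R / (12%:R - 1) + (12%:R - 1) - 1 : R) = 2 * 11%:R by field.
  exact: (@regular_eig R 12 e 11 sg isT dc).
Qed.

Lemma star_sum (R : rcfType) (n : nat) (e : rel 'I_n) c :
  (0 < n)%N -> deg e c = n.-1 -> (forall x, x != c -> deg e x = 1%N) ->
  \sum_j ((deg e j)%:R : R) = 2 * (n%:R - 1).
Proof.
move=> n0 dc dx.
have hn : \sum_(j : 'I_n) (1 : R) = n%:R by rewrite sumr_const card_ord.
rewrite (bigD1 c) //= dc natr_pred //.
rewrite (bigD1 c) //= in hn.
rewrite (eq_bigr (fun _ => 1)); last by move=> j jc; rewrite dx.
lra.
Qed.

Lemma part_b (R : rcfType) (n : nat) (e : rel 'I_n) (q : R) :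
  simple_graph e -> connected_graph e ->
  largest_eigenvalue (signless_laplacian R e) q -> (13 <= n)%N ->
     q / randic R e <= n%:R / Num.sqrt (n.-1)%:R /\
     (q / randic R e = n%:R / Num.sqrt (n.-1)%:R <-> is_star e).
Proof.
move=> sg con lev n13; have [sym irr] := sg.
have n2 : (1 < n)%N by apply: leq_trans n13.
have n0 : (0 < n)%N by apply: ltn_trans n2.
have hpr : (n.-1)%:R = n%:R - 1 :> R := natr_pred R n0.
set k := Num.sqrt (n.-1)%:R.
have hk : k ^+ 2 = n%:R - 1 by rewrite sqr_sqrtr ?ler0n.
have k0 : 0 <= k by apply: sqrtr_ge0.
have n13R : 13 <= n%:R :> R by rewrite ler_nat.
have kpos : 0 < k by nra.
have hn : n%:R = k ^+ 2 + 1 :> R by rewrite hk; ring.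
set D := \sum_j ((deg e j)%:R : R).
have D0 : 0 <= D by apply: sumr_ge0 => j _; apply: ler0n.
have sl0 : forall u v : 'I_n, e u v ->
    0 <= slack e (2 / (n%:R * k) : R) (k * (n%:R - 2) / n%:R ^+ 2) u v.
  move=> u v euv; have [h1 h2] := degR_bounds R u sg con n2.
  have [h3 h4] := degR_bounds R v sg con n2.
  by have [? _] := @edge_b R n%:R k (deg e u)%:R (deg e v)%:R n13R k0 hk h1 h2 h3 h4.
have C0 : 0 < n%:R / k by apply: divr_gt0 => //; lra.
have CL : n%:R / k * (2 / (n%:R * k) * D / 2 + k * (n%:R - 2) / n%:R ^+ 2 * n%:R)
          = D / (n%:R - 1) + (n%:R - 1) - 1.
  rewrite hn; field; apply/and3P; split; rewrite gt_eqF //; nra.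
have L0 : 0 < 2 / (n%:R * k) * D / 2 + k * (n%:R - 2) / n%:R ^+ 2 * n%:R.
  have a1 : 0 <= 2 / (n%:R * k) * D / 2.
    by apply: divr_ge0 => //; apply: mulr_ge0 => //; apply: divr_ge0 => //; apply: mulr_ge0; lra.
  have a2 : 0 < k * (n%:R - 2) / n%:R ^+ 2 * n%:R.
    apply: mulr_gt0; last by lra.
    apply: divr_gt0; last by apply: exprn_gt0; lra.
    apply: mulr_gt0 => //; lra.
  lra.
have [le eqimp] := main_gen sg con n2 lev sl0 C0 CL L0.
have dcases : forall u v : 'I_n, e u v ->
    slack e (2 / (n%:R * k) : R) (k * (n%:R - 2) / n%:R ^+ 2) u v = 0 ->
    (deg e u = 1%N /\ deg e v = n.-1) \/ (deg e u = n.-1 /\ deg e v = 1%N).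
  move=> u v euv hz; have [h1 h2] := degR_bounds R u sg con n2.
  have [h3 h4] := degR_bounds R v sg con n2.
  have [_ H] := @edge_b R n%:R k (deg e u)%:R (deg e v)%:R n13R k0 hk h1 h2 h3 h4.
  case: (H hz) => [[a b]|[a b]].
    by left; split; [apply: (natr_eq1 (R := R)) | apply: (natr_eq_pred (R := R))].
  by right; split; [apply: (natr_eq_pred (R := R)) | apply: (natr_eq1 (R := R))].
have n1ne : n.-1 != 1%N by apply/eqP => h; move: n13; rewrite -(prednK n0) h.
split => //; split.
  move=> /eqimp hz.
  have [c dc] : exists c, deg e c = n.-1.
    have [w uw] := exists_nb (Ordinal n0) sg con n2.
    case: (dcases _ _ uw (hz _ _ uw)) => [[_ b]|[a _]]; first by exists w.
    by exists (Ordinal n0).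
  have F1 := deg_full sg dc.
  have F2 : forall x, x != c -> deg e x = 1%N.
    move=> x xc; have ecx := F1 x xc.
    case: (dcases _ _ ecx (hz _ _ ecx)) => [[a _]|[_ b]] //.
    by move: n1ne; rewrite -dc a.
  exists c => x y.
  case: (eqVneq x c) => [->|xc].
    rewrite /= andbT; case: (eqVneq c y) => [<-|cy]; first by rewrite irr.
    by rewrite F1 // eq_sym.
  case: (eqVneq y c) => [->|yc].
    by rewrite /= andbT sym F1.
  rewrite /= ?andbF; apply/negP => exy.
  have exc : e x c by rewrite sym F1.
  have h := deg_one (F2 x xc) exc exy.
  by move: yc; rewrite h eqxx.
move=> [c he]; have [dc dx] := star_facts he.
apply: (main_eq (c := 2 / (n%:R * k)) (l := k * (n%:R - 2) / n%:R ^+ 2)) => //.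
- have key : (Num.sqrt ((n.-1)%:R * 1%:R))^-1 - 2 / (n%:R * k)
        - k * (n%:R - 2) / n%:R ^+ 2 * (((n.-1)%:R)^-1 + (1%:R)^-1) = 0 :> R.
    rewrite mulr1 -/k hpr hn; field; apply/and3P; split; rewrite gt_eqF //; nra.
  move=> u v; rewrite he /slack => /andP [uv /orP [] /eqP h].
    subst u; rewrite dc dx 1?eq_sym //; exact: key.
  subst v; rewrite dc dx //; rewrite [(1%:R * _)]mulrC [((1%:R)^-1 + _)]addrC; exact: key.
- rewrite (star_sum R n0 dc dx).
  have -> : 2 * (n%:R - 1) / (n%:R - 1) + (n%:R - 1) - 1 = n%:R :> R.
    by field; rewrite gt_eqF //; lra.
  exact: (star_eig R sg n2 he).
Qed.

Unset Implicit Arguments.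

Theorem theorem1p2 (R : rcfType) (n : nat) (e : rel 'I_n) (q : R) :
  simple_graph e -> connected_graph e ->
  largest_eigenvalue (signless_laplacian R e) q ->
  (n = 12%N ->
     q / randic R e <= 11%:R / 3%:R /\
     (q / randic R e = 11%:R / 3%:R <-> is_complete e)) /\
  ((13 <= n)%N ->
     q / randic R e <= n%:R / Num.sqrt (n.-1)%:R /\
     (q / randic R e = n%:R / Num.sqrt (n.-1)%:R <-> is_star e)).
Proof.
move=> sg con lev; split.
  by move=> n12; subst n; exact: part_a.
by move=> n13; exact: part_b.
Qed.
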